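(* Let $\ell\in\mathbb{N}$ be fixed. Let $G\in\mathcal{G}_{k,n,p}$ and $v\neq w\in V(G)$, and let $X=X_0,X_1,\dots$ be a simple random walk on $G$ starting at $w$. Then \[ H_{wv}=\ell+H_{\mu_\ell v}-\frac{2|E(G)|}{d(v)}\sum_{i=1}^{\ell-1}\mathbb{P}_w[X_i=v]\pm\mathcal{O}\!\left(\frac1{pn}\right). \]
   Context: Fix an integer $k\ge2$ and let $p=p(n)$ satisfy $\frac{\log n}{n^{(k-1)/k}}\le p\le 1-\Omega(\frac{\log^4 n}{n})$. $\mathcal{G}_{k,n,p}$ denotes the set of graphs $G$ on $n$ vertices satisfying: (i) $G$ is not bipartite; (ii) $\operatorname{diam}(G)\le k$; (iii) every vertex has degree $d(v)=pn\pm\mathcal{O}(\sqrt{pn\log n})$; (iv) $2|E(G)|=pn^2\pm\mathcal{O}(\sqrt{pn^2\log n})$; (v) $|N(v)\cap N(w)|=p^2n\pm\mathcal{O}(\max\{\sqrt{p^2n\log n},\log n\})$ for all $v\ne w$; (vi) the unit eigenvector $\phi$ of the largest adjacency eigenvalue has entries $\phi_i=\frac1{\sqrt n}\pm\mathcal{O}(\frac{\log^{3/2}n}{\sqrt p\,n\log(pn)})$; (vii) $\lambda_1=(1+o(1))pn$; (viii) $\max\{|\lambda_2|,|\lambda_n|\}=\mathcal{O}(\sqrt{pn})$, where $\lambda_1\ge\dots\ge\lambda_n$ are the adjacency eigenvalues. Asymptotic notation is as $n\to\infty$ with constants independent of $n$. $\mathbb{P}_w[\cdot]=\mathbb{P}[\cdot\mid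 X_0=w]$; $\mu_\ell(x)=\mathbb{P}_w[X_\ell=x]$; $H_{uv}$ is the expected first hitting time of $v$ from $u$ ($H_{vv}=0$) and $H_{\mu_\ell v}=\sum_u\mu_\ell(u)H_{uv}$. *)

(* Defs.v *)
From HB Require Import structures.
From mathcomp Require Import all_boot all_order all_algebra.
From mathcomp Require Import all_classical all_reals all_analysis.
Set Implicit Arguments. Unset Strict Implicit. Unset Printing Implicit Defensive.
Import Order.TTheory GRing.Theory Num.Theory numFieldTopology.Exports numFieldNormedType.Exports.
Local Open Scope ring_scope.

Definition simple_graph (n : nat) (e : rel 'I_n) : Prop :=
  (forall x y, e x y = e y x) /\ (forall x, ~~ e x x).

Section Graphs.
Variables (R : realType) (n : nat) (e : rel 'I_n).

Definition nbhd (x : 'I_n) : {set 'I_n} := [set y | e x y].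
Definition deg (x : 'I_n) : nat := #|nbhd x|.
Definition nedges : nat := #|[set xy : 'I_n * 'I_n | e xy.1 xy.2 && (xy.1 < xy.2)%N]|.

Definition bipartite : Prop :=
  exists f : 'I_n -> bool, forall x y, e x y -> f x != f y.

Definition diam_le (k : nat) : Prop :=
  forall x y : 'I_n, exists s : seq 'I_n,
    [/\ (size s <= k)%N, path e x s & last x s = y].

Definition adjmx : 'M[R]_n := \matrix_(i, j) (e i j)%:R.

(* eigenvalues with multiplicity, in non-increasing order lambda_1 >= ... >= lambda_n *)
Definition is_spectrum (A : 'M[R]_n) (s : seq R) : Prop :=
  sorted (fun a b => b <= a) s /\
  char_poly A = \prod_(x <- s) ('X - x%:P).

Definition trans : 'M[R]_n :=
  \matrix_(i, j) (if e i j then (deg i)%:R^-1 else 0).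

Definition walkprob (t : nat) (w x : 'I_n) : R := (trans ^+ t) w x.

(* walk killed on entering v *)
Definition killed (v : 'I_n) : 'M[R]_n :=
  \matrix_(i, j) (if j == v then 0 else trans i j).

(* P_u[T_v = t] for t >= 1, where T_v = min {t >= 0 : X_t = v} and u <> v *)
Definition firstpass (v u : 'I_n) (t : nat) : R :=
  \sum_(x : 'I_n) (killed v ^+ t.-1) u x * trans x v.

Definition hit_terms (u v : 'I_n) : R^nat :=
  fun t => t%:R * (if t == 0%N then 0 else firstpass v u t).

Definition hit (u v : 'I_n) : R :=
  if u == v then 0
  else limn (series (hit_terms u v)).

(* H_{mu_l v} = sum_u mu_l(u) H_uv, mu_l(u) = P_w[X_l = u] *)
Definition hit_mu (l : nat) (w v : 'I_n) : R :=
  \sum_(u : 'I_n) walkprob l w u * hit u v.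

End Graphs.

(* The class G_{k,n,p}; c is the constant hidden in the O(.) terms of
   (iii)-(vi),(viii), eps is the value at n of the o(1) term in (vii). *)
Definition in_class (R : realType) (k n : nat) (p c eps : R) (e : rel 'I_n) : Prop :=
  let nR : R := n%:R in
  [/\ simple_graph e,
      ~ bipartite e,
      diam_le e k,
      [/\ (forall v, `|(deg e v)%:R - p * nR| <= c * Num.sqrt (p * nR * ln nR)),
      `|(2 * nedges e)%:R - p * nR ^+ 2| <= c * Num.sqrt (p * nR ^+ 2 * ln nR)
    & (forall v w, v != w ->
         `|(#|nbhd e v :&: nbhd e w|)%:R - p ^+ 2 * nR|
           <= c * Num.max (Num.sqrt (p ^+ 2 * nR * ln nR)) (ln nR))]
    & (exists s : seq R, is_spectrum (adjmx R e) s /\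
      [/\ (exists phi : 'cV[R]_n,
             [/\ adjmx R e *m phi = s`_0 *: phi,
                 \sum_i phi i 0 ^+ 2 = 1
               & forall i, `|phi i 0 - (Num.sqrt nR)^-1|
                     <= c * (ln nR `^ (3 / 2)) / (Num.sqrt p * nR * ln (p * nR))]),
          `|s`_0 - p * nR| <= eps * (p * nR)
        & Num.max `|s`_1| `|s`_(n.-1)| <= c * Num.sqrt (p * nR)])].

(* Main.v *)
Require Import Defs.
From HB Require Import structures.
From mathcomp Require Import all_boot all_order all_algebra.
From mathcomp Require Import all_classical all_reals all_analysis.
From mathcomp Require Import ring lra.
Import Order.TTheory GRing.Theory Num.Theory numFieldTopology.Exports numFieldNormedType.Exports.
Local Open Scope classical_set_scope.
Local Open Scope ring_scope.
Section Walk.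
Variables (R : realType) (n : nat) (e : rel 'I_n).
Hypothesis sg : simple_graph e.
Variables (k : nat) (v w : 'I_n).
Hypotheses (hk : (2 <= k)%N) (hd : diam_le e k) (vw : v != w).

Local Notation P := (trans R e).
Local Notation Q := (killed R e v).

Lemma deg_gt0 x : (0 < deg e x)%N.
Proof.
have [y yx] : exists y, y != x.
  case: (eqVneq x v) => [->|xv]; first by exists w; rewrite eq_sym.
  by exists v; rewrite eq_sym.
have [s [_ ps ls]] := hd x y.
case: s ps ls => [|z s] /=; first by move=> _ yx'; rewrite yx' eqxx in yx.
move=> /andP[exz _] _.
by apply/card_gt0P; exists z; rewrite inE.
Qed.

Lemma transE x y : P x y = if e x y then (deg e x)%:R^-1 else 0.
Proof. by rewrite mxE. Qed.

Lemma trans_ge0 x y : 0 <= P x y.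
Proof. by rewrite transE; case: ifP => // _; rewrite invr_ge0 ler0n. Qed.

Lemma trans_row1 x : \sum_y P x y = 1.
Proof.
rewrite (bigID (e x)) /= [X in _ + X]big1 ?addr0; last first.
  by move=> y /negbTE h; rewrite transE h.
rewrite (eq_bigr (fun _ => (deg e x)%:R^-1)); last by move=> y h; rewrite transE h.
rewrite sumr_const.
have -> : #|[pred y | e x y]| = deg e x.
  by rewrite /deg /nbhd; apply: eq_card => y; rewrite !inE.
by rewrite -[LHS]mulr_natl mulfV // pnatr_eq0 -lt0n deg_gt0.
Qed.

Lemma killedE x y : Q x y = if y == v then 0 else P x y.
Proof. by rewrite mxE. Qed.

Lemma killed_ge0 x y : 0 <= Q x y.
Proof. by rewrite killedE; case: ifP => // _; apply: trans_ge0. Qed.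

Lemma killed_sum x (f : 'I_n -> R) :
  \sum_y Q x y * f y = \sum_y P x y * (if y == v then 0 else f y).
Proof. by apply: eq_bigr => y _; rewrite killedE; case: ifP; rewrite ?mul0r ?mulr0. Qed.

Lemma killedX_ge0 t x y : 0 <= (Q ^+ t) x y.
Proof.
elim: t x y => [|t IH] x y; first by rewrite expr0 mxE; case: (x == y).
rewrite exprS mxE; apply: sumr_ge0 => z _; apply: mulr_ge0 => //; exact: killed_ge0.
Qed.

Definition one : 'cV[R]_n := const_mx 1.
Definition r t x := ((Q ^+ t) *m one) x 0.

Lemma rE t x : r t x = \sum_y (Q ^+ t) x y.
Proof. by rewrite /r mxE; apply: eq_bigr => y _; rewrite mxE mulr1. Qed.

Lemma r0 x : r 0 x = 1.
Proof. by rewrite /r expr0 mul1mx mxE. Qed.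

Lemma rS t x : r t.+1 x = \sum_y Q x y * r t y.
Proof. by rewrite /r exprS -mulmxA mxE. Qed.

Lemma rSr t x : r t.+1 x = \sum_y (Q ^+ t) x y * r 1 y.
Proof. by rewrite /r exprSr -mulmxA mxE; apply: eq_bigr => y _; rewrite expr1. Qed.

Lemma r1 x : r 1 x = 1 - P x v.
Proof.
rewrite rS killed_sum (bigD1 v) //= eqxx mulr0 add0r.
rewrite -(trans_row1 x) [in RHS](bigD1 v) //= addrAC subrr add0r.
by apply: eq_bigr => y /negbTE ->; rewrite r0 mulr1.
Qed.

Lemma r_ge0 t x : 0 <= r t x.
Proof. by rewrite rE; apply: sumr_ge0 => y _; exact: killedX_ge0. Qed.

Lemma r_dec t x : r t.+1 x <= r t x.
Proof.
elim: t x => [|t IH] x.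
  by rewrite r1 r0 lerBlDr lerDl trans_ge0.
rewrite (rS t.+1) (rS t); apply: ler_sum => y _.
by apply: ler_wpM2l; [exact: killed_ge0 | exact: IH].
Qed.

Lemma r_mono t1 t2 x : (t1 <= t2)%N -> r t2 x <= r t1 x.
Proof.
move=> /subnK <-; elim: (t2 - t1)%N => [|d IH] //.
by rewrite addSn; apply: le_trans (r_dec _ _) IH.
Qed.

Lemma r_le1 t x : r t x <= 1.
Proof. by rewrite -(r0 x); apply: r_mono. Qed.

Lemma firstpassE t u : firstpass R e v u t.+1 = r t u - r t.+1 u.
Proof.
rewrite /firstpass /= rSr rE -sumrB; apply: eq_bigr => x _.
by rewrite r1 mulrBr mulr1 opprB addrC subrK.
Qed.

Lemma path_r s x : path e x s -> last x s = v -> s != [::] -> r (size s) x < 1.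
Proof.
elim: s x => [|y s IH] x //= /andP[exy ps] ls _.
rewrite rS killed_sum.
set q := fun z => if z == v then 0 else r (size s) z.
have qle z : q z <= 1 by rewrite /q; case: ifP => _; [exact: ler01 | exact: r_le1].
have qy : q y < 1.
  rewrite /q; case: (eqVneq y v) => [_|yv]; first exact: ltr01.
  apply: IH => //; case: s ps ls {q qle} => //= _ ls; by rewrite ls eqxx in yv.
have Pxy : 0 < P x y by rewrite transE exy invr_gt0 ltr0n deg_gt0.
rewrite -(trans_row1 x) (bigD1 y) //= [X in _ < X](bigD1 y) //=.
apply: ltr_leD; first by rewrite -[X in _ < X]mulr1 ltr_pM2l.
by apply: ler_sum => z _; apply: ler_piMr; [exact: trans_ge0 | exact: qle].
Qed.

Lemma rK_lt1 x : r k x < 1.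
Proof.
case: (eqVneq x v) => [->|xv].
  have /card_gt0P [y] := deg_gt0 v; rewrite inE => evy.
  apply: le_lt_trans (@r_mono _ _ v hk) _.
  apply: (@path_r [:: y; v]) => //=.
  by rewrite evy /= sg.1 evy.
have [s [sk ps ls]] := hd x v.
apply: le_lt_trans (@r_mono _ _ x sk) _; apply: path_r => //.
by case: s ps ls {sk} => //= _ xv'; rewrite xv' eqxx in xv.
Qed.

Lemma exists_a : exists a, [/\ 0 <= a, a < 1 & forall x, r k x <= a].
Proof.
have : forall s : seq 'I_n, exists a, [/\ 0 <= a, a < 1 & forall x, x \in s -> r k x <= a].
  elim => [|y s [a [a0 a1 ha]]]; first by exists 0; split => //; exact: ltr01.
  exists (Num.max a (r k y)); split.
  - by rewrite le_max a0.
  - by rewrite gt_max a1 rK_lt1.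
  - move=> x; rewrite inE => /orP[/eqP ->|xs]; first by rewrite le_max lexx orbT.
    by rewrite le_max ha.
move=> /(_ (enum 'I_n)) [a [a0 a1 ha]]; exists a; split => // x.
by apply: ha; rewrite mem_enum.
Qed.

Definition G N x := \sum_(0 <= s < N) r s x.

Lemma r_addn N x : r (k + N) x = \sum_y (Q ^+ k) x y * r N y.
Proof. by rewrite /r exprD -mulmxA mxE. Qed.

Lemma G_shift N x : G (k + N) x = G k x + \sum_y (Q ^+ k) x y * G N y.
Proof.
elim: N x => [|N IH] x.
  rewrite addn0 big1 ?addr0 // => y _; by rewrite /G big_geq // mulr0.
rewrite addnS /G big_nat_recr //= -/(G _ x) IH -addrA; congr (_ + _).
rewrite r_addn -big_split /=; apply: eq_bigr => y _.
by rewrite /G big_nat_recr //= mulrDr.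
Qed.

Lemma G_ge0 N x : 0 <= G N x.
Proof. by apply: sumr_ge0 => s _; exact: r_ge0. Qed.

Lemma G_le_N N x : G N x <= N%:R.
Proof.
rewrite /G -[X in _ <= X%:R](subn0 N) -sumr_const_nat.
by apply: ler_sum => s _; exact: r_le1.
Qed.

Lemma G_bound : exists B, 0 <= B /\ forall N x, G N x <= B.
Proof.
have [a [a0 a1 ha]] := exists_a.
have a1' : 0 < 1 - a by rewrite subr_gt0.
exists (k%:R / (1 - a)); split; first by rewrite divr_ge0 // subr_ge0 ltW.
set B := k%:R / (1 - a).
have kB : k%:R <= B by rewrite /B ler_pdivlMr //; apply: ler_piMr; rewrite ?ler0n // lerBlDr lerDl.
have eB : k%:R + B * a = B.
  by rewrite /B mulrAC -[X in X + _](mulfK (lt0r_neq0 a1')) -mulrDl mulrBr mulr1 subrK.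
suff: forall N M, (M <= N)%N -> forall x, G M x <= B by move=> h N x; exact: (h N).
elim => [|N IH] M MN x.
  by move: MN; rewrite leqn0 => /eqP ->; rewrite /G big_geq // (le_trans _ kB).
case: (leqP M N) => [|NM]; first by move=> h; exact: IH.
case: (leqP M k) => Mk.
  by apply: le_trans (G_le_N _ _) (le_trans _ kB); rewrite ler_nat.
rewrite -(subnKC (ltnW Mk)) G_shift.
apply: le_trans (lerD (G_le_N k x) (_ : _ <= B * a)) _; last by rewrite eB.
apply: le_trans (_ : \sum_y (Q ^+ k) x y * B <= _).
  apply: ler_sum => y _; apply: ler_wpM2l; first exact: killedX_ge0.
  by apply: IH; rewrite leq_subLR; apply: leq_trans MN _; rewrite -addn1 addnC leq_add2r (leq_trans _ hk).
by rewrite -mulr_suml -rE mulrC ler_wpM2l // ?ha // (le_trans _ kB).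
Qed.

Lemma cvg_fsum (I : finType) (f : I -> nat -> R) (a : I -> R) :
  (forall i, f i @ \oo --> a i) -> (fun N => \sum_i f i N) @ \oo --> \sum_i a i.
Proof. move=> H; apply: cvg_big => //; exact: add_continuous. Qed.

Lemma G_nd x : nondecreasing_seq (fun N => G N x).
Proof.
move=> N M NM; rewrite /G (big_cat_nat (leq0n N) NM) /= lerDl.
by apply: sumr_ge0 => s _; exact: r_ge0.
Qed.

Variable B : R.
Hypothesis hB : 0 <= B /\ forall N x, G N x <= B.

Lemma G_cvg x : cvgn (fun N => G N x).
Proof.
apply: nondecreasing_is_cvgn; first exact: G_nd.
by exists B => _ [N _ <-]; exact: hB.2.
Qed.

Definition g x := limn (fun N => G N x).

Lemma r_harm N x : r N x <= B * harmonic N.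
Proof.
rewrite /= ler_pdivlMr ?ltr0n //.
apply: le_trans (hB.2 N.+1 x); rewrite /G.
have <- : \sum_(0 <= s < N.+1) r N x = r N x * N.+1%:R.
  by rewrite sumr_const_nat subn0 mulr_natr.
by apply: ler_sum_nat => s /andP[_ sN]; apply: r_mono; rewrite -ltnS.
Qed.

Definition S' x N := G N x - N%:R * r N x.

Lemma seriesE x N : series (hit_terms R e x v) N.+1 = S' x N.
Proof.
rewrite /series /S' /=; elim: N => [|N IH].
  by rewrite big_nat1 /hit_terms /= mul0r /G big_geq // mul0r subr0.
rewrite big_nat_recr //= IH /hit_terms /= firstpassE /G big_nat_recr //=.
rewrite -natr1; ring.
Qed.

Lemma S'_le_G x N : S' x N <= G N x.
Proof. by rewrite /S' lerBlDr lerDl mulr_ge0 ?ler0n ?r_ge0. Qed.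

Lemma S'_low M N x : (M <= N)%N -> G M x - M%:R * r N x <= S' x N.
Proof.
move=> MN.
have E K : G K x - K%:R * r N x = \sum_(0 <= s < K) (r s x - r N x).
  by rewrite sumrB sumr_const_nat subn0 mulr_natl.
rewrite /S' !E (big_cat_nat (leq0n M) MN) /= lerDl.
rewrite big_nat_cond; apply: sumr_ge0 => s /andP[/andP[_ sN] _].
by rewrite subr_ge0; apply: r_mono; rewrite ltnW.
Qed.

Lemma S'_nd x : nondecreasing_seq (S' x).
Proof.
apply/nondecreasing_seqP => N; rewrite /S' /G big_nat_recr //= -natr1.
have := r_dec N x; have := r_ge0 N.+1 x; have := r_ge0 N x.
have : 0 <= N%:R :> R by [].
move: (\sum_(0 <= i < N) r i x) (r N x) (r N.+1 x) (N%:R : R) => a b c m.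
move=> m0 b0 c0 cb.
have : 0 <= (m + 1) * (b - c) by rewrite mulr_ge0 // ?subr_ge0 // addr_ge0.
move=> h; rewrite -subr_ge0; apply: le_trans h _; rewrite le_eqVlt; apply/orP; left; apply/eqP; ring.
Qed.

Lemma S'_cvg x : S' x @ \oo --> g x.
Proof.
have cS : cvgn (S' x).
  apply: nondecreasing_is_cvgn; first exact: S'_nd.
  by exists B => _ [N _ <-]; apply: le_trans (S'_le_G x N) (hB.2 N x).
suff <- : limn (S' x) = g x by [].
apply/le_anti/andP; split.
  by apply: ler_lim => //; [exact: G_cvg | apply: nearW => N; exact: S'_le_G].
apply: limr_le; first exact: G_cvg.
apply: nearW => M.
have h : (fun N => G M x - M%:R * (B * harmonic N)) @ \oo --> G M x - M%:R * (B * 0).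
  apply: (@cvgB _ _ _ _ _ (fun=> G M x) (fun N => M%:R * (B * harmonic N))).
    exact: cvg_cst.
  exact: (cvgMr (cvgMr cvg_harmonic)).
rewrite mulr0 mulr0 subr0 in h.
apply: (ler_cvg_to h cS).
near=> N.
have MN : (M <= N)%N by near: N; exact: nbhs_infty_ge.
apply: le_trans _ (@S'_low M N x MN); rewrite lerB // ler_wpM2l ?ler0n //.
exact: r_harm.
Unshelve. all: by end_near.
Qed.

Lemma hit_g x : x != v -> hit R e x v = g x.
Proof.
move=> xv; rewrite /hit (negbTE xv).
apply: (cvg_lim (@Rhausdorff R)).
rewrite -cvg_shiftS.
have -> : [sequence series (hit_terms R e x v) n.+1]_n = S' x.
  by apply/funext => N /=; rewrite seriesE.
exact: S'_cvg.
Qed.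

Lemma g_eq x : g x = 1 + \sum_y Q x y * g y.
Proof.
have Gs N : G N.+1 x = 1 + \sum_y Q x y * G N y.
  rewrite /G big_nat_recl //= r0; congr (_ + _).
  under eq_bigr do rewrite rS.
  rewrite exchange_big /=; apply: eq_bigr => y _.
  by rewrite mulr_sumr.
have H1 : [sequence G n.+1 x]_n @ \oo --> g x.
  have := G_cvg x; rewrite -cvg_shiftS; exact.
have H2 : [sequence G n.+1 x]_n @ \oo --> 1 + \sum_y Q x y * g y.
  have -> : [sequence G n.+1 x]_n = (fun N => 1 + \sum_y Q x y * G N y).
    by apply/funext => N /=; rewrite Gs.
  apply: cvgD; first exact: cvg_cst.
  apply: cvg_fsum => y; apply: cvgMr; exact: G_cvg.
exact: (cvg_unique _ H1 H2).
Qed.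

Lemma hit_vv : hit R e v v = 0.
Proof. by rewrite /hit eqxx. Qed.

Lemma Phit u : \sum_y P u y * hit R e y v = g u - 1.
Proof.
rewrite (g_eq u) [1 + _]addrC addrK killed_sum; apply: eq_bigr => y _.
case: (eqVneq y v) => [->|yv]; first by rewrite hit_vv.
by rewrite hit_g.
Qed.

Lemma deg_sum_nat : (\sum_u deg e u = 2 * nedges e)%N.
Proof.
have degE u : deg e u = (\sum_y (e u y : nat))%N.
  rewrite /deg /nbhd -sum1_card big_mkcond /=; apply: eq_bigr => y _.
  by rewrite inE; case: (e u y).
have nE : nedges e = (\sum_x \sum_y ((e x y) && (x < y)%N : nat))%N.
  rewrite /nedges -sum1_card big_mkcond /= pair_bigA /=; apply: eq_bigr => [[x y]] _.
  by rewrite inE /=; case: (_ && _).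
under eq_bigr do rewrite degE.
have hsplit x y : (e x y : nat) = ((e x y) && (x < y)%N : nat) + ((e y x) && (y < x)%N : nat).
  rewrite sg.1; case exy: (e y x) => //=.
  have xy : x != y by apply/eqP => xy; move: exy; rewrite xy (negbTE (sg.2 y)).
  by case: (ltngtP x y) => //= xy'; rewrite (ord_inj xy') eqxx in xy.
under eq_bigr do under eq_bigr do rewrite hsplit.
under eq_bigr do rewrite big_split /=.
rewrite big_split /= -nE exchange_big /= -nE.
by rewrite mul2n addnn.
Qed.

Lemma degE u : deg e u = (\sum_y (e u y : nat))%N.
Proof.
rewrite /deg /nbhd -sum1_card big_mkcond /=; apply: eq_bigr => y _.
by rewrite inE; case: (e u y).
Qed.

Lemma deg_trans u y : (deg e u)%:R * P u y = (e u y)%:R.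
Proof.
rewrite transE; case: (e u y); last by rewrite mulr0.
by rewrite mulfV // pnatr_eq0 -lt0n deg_gt0.
Qed.

Lemma kac : g v = (2 * nedges e)%:R / (deg e v)%:R.
Proof.
set d := fun u => (deg e u)%:R : R.
have key : \sum_u d u * (\sum_y P u y * hit R e y v) = \sum_y d y * hit R e y v.
  under eq_bigr do rewrite mulr_sumr.
  rewrite exchange_big /=; apply: eq_bigr => y _.
  under eq_bigr do rewrite mulrA deg_trans.
  rewrite -mulr_suml; congr (_ * _).
  rewrite /d degE natr_sum; apply: eq_bigr => u _; by rewrite sg.1.
have L : \sum_u d u * (\sum_y P u y * hit R e y v)
   = \sum_u d u * hit R e u v - \sum_u d u + d v * g v.
  under eq_bigr do rewrite Phit.
  rewrite -sumrB (bigD1 v) //= [X in _ = X + _](bigD1 v) //= hit_vv.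
  have -> : \sum_(i | i != v) d i * (g i - 1) = \sum_(i | i != v) (d i * hit R e i v - d i).
    by apply: eq_bigr => u uv; rewrite hit_g // mulrBr mulr1.
  ring.
have D : \sum_u d u = (2 * nedges e)%:R by rewrite /d -natr_sum deg_sum_nat.
have dv : d v != 0 by rewrite /d pnatr_eq0 -lt0n deg_gt0.
have E : d v * g v = \sum_u d u.
  move: key; rewrite L => key; rewrite -[RHS]addr0 -[X in _ + X](subrr (\sum_u d u * hit R e u v)).
  rewrite -{1}key; ring.
rewrite -D -E /d; field; exact: dv.
Qed.

Lemma Phit' u : \sum_y P u y * hit R e y v
  = hit R e u v - 1 + (if u == v then (2 * nedges e)%:R / (deg e v)%:R else 0).
Proof.
rewrite Phit; case: (eqVneq u v) => [->|uv]; first by rewrite hit_vv kac; ring.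
by rewrite hit_g // addr0.
Qed.

Lemma Pow_row1 i x : \sum_z (P ^+ i) x z = 1.
Proof.
elim: i x => [|i IH] x.
  rewrite expr0 (bigD1 x) //= big1 ?addr0 => [|z zx]; first by rewrite mxE eqxx.
  by rewrite mxE eq_sym (negbTE zx).
rewrite exprS; under eq_bigr do rewrite mxE.
rewrite exchange_big /= -(trans_row1 x); apply: eq_bigr => y _.
by rewrite -mulr_sumr IH mulr1.
Qed.

Lemma walk_iter i : \sum_u walkprob R e i w u * hit R e u v
  = hit R e w v - i%:R + (2 * nedges e)%:R / (deg e v)%:R * \sum_(0 <= j < i) walkprob R e j w v.
Proof.
set kap := (2 * nedges e)%:R / (deg e v)%:R.
elim: i => [|i IH].
  rewrite big_geq // mulr0 addr0 subr0 (bigD1 w) //= big1 ?addr0 => [|u uw].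
    by rewrite /walkprob expr0 mxE eqxx mul1r.
  by rewrite /walkprob expr0 mxE eq_sym (negbTE uw) mul0r.
rewrite /walkprob; under eq_bigr do rewrite exprSr mxE mulr_suml.
rewrite exchange_big /=.
under eq_bigr do (under eq_bigr do rewrite -mulrA; rewrite -mulr_sumr Phit').
under eq_bigr do rewrite mulrDr mulrBr mulr1.
rewrite big_split sumrB /= -/kap; rewrite /walkprob in IH; rewrite IH Pow_row1 big_nat_recr //=.
have -> : \sum_u (P ^+ i) w u * (if u == v then kap else 0) = (P ^+ i) w v * kap.
  rewrite (bigD1 v) //= eqxx big1 ?addr0 // => u uv; by rewrite (negbTE uv) mulr0.
rewrite -natr1; ring.
Qed.
End Walk.

Theorem lemma5p1 (R : realType) (k l : nat) (p : nat -> R) :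
  (2 <= k)%N ->
  (exists (c0 : R) (N0 : nat), 0 < c0 /\ forall n : nat, (N0 <= n)%N ->
     ln n%:R / n%:R `^ ((k.-1)%:R / k%:R) <= p n /\
     p n <= 1 - c0 * ln n%:R ^+ 4 / n%:R) ->
  forall (c : R) (eps : nat -> R), eps @ \oo --> 0 ->
  exists (C : R) (N : nat), forall (n : nat) (e : rel 'I_n), (N <= n)%N ->
    in_class k (p n) c (eps n) e ->
    forall v w : 'I_n, v != w ->
      `| hit R e w v
         - (l%:R + hit_mu R e l w v
            - (2 * nedges e)%:R / (deg e v)%:R
              * \sum_(1 <= i < l) walkprob R e i w v) |
      <= C / (p n * n%:R).
Proof.
move=> hk _ c eps _; exists 0, 0%N => n e _ [sg _ hd _ _] v w vw.
have [B hB] := @G_bound R n e sg k v w hk hd vw.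
have W := @walk_iter R n e sg k v w hd vw B hB l.
rewrite mul0r normr_le0 subr_eq0 /hit_mu W.
have -> : \sum_(0 <= j < l) walkprob R e j w v = \sum_(1 <= i < l) walkprob R e i w v.
  case: l {W} => [|l]; first by rewrite !big_geq.
  by rewrite big_ltn // /walkprob expr0 mxE eq_sym (negbTE vw) add0r.
apply/eqP; ring.
Qed.
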